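(* Let $\mathcal H^{gen}$ be a set of measurable functions $G\colon[0,1]^d\to\mathbb R^d$ such that $G_{\#}\lambda$ is absolutely continuous with respect to Lebesgue measure for each $G\in\mathcal H^{gen}$, and let $\mathcal H^{dis}$ be a set of measurable functions $D\colon\mathbb R^d\to[0,1]$. Let $\hat G_n=\hat G_n(\omega)\in\mathcal H^{gen}$, $n\in\mathbb N$, $\omega\in\Omega$, be a random sequence of generators. Let $$\Delta_G=\inf_{G\in\mathcal H^{gen}}d_{JS}(\mu^*,G_{\#}\lambda),\qquad \Delta_D=\sup_{G\in\mathcal H^{gen}}\Big\{L(G,D_G)-\sup_{D\in\mathcal H^{dis}}L(G,D)\Big\},$$ $$\Delta_S(n)=\sup_{G\in\mathcal H^{gen},D\in\mathcal H^{dis}}|L(G,D)-\hat L_n(G,D)|,\qquad \Delta_T(n)=\sup_{D\in\mathcal H^{dis}}\hat L_n(\hat G_n,D)-\inf_{G\in\mathcal H^{gen}}\sup_{D\in\mathcal H^{dis}}\hat L_n(G,D).$$ Then for all $n\in\mathbb N$, almost surely, $$d_{JS}(\mu^*,(\hat G_n)_{\#}\lambda)\le\Delta_T(n)+\Delta_D+2\Delta_S(n)+\Delta_G.$$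
   Context: Let $d\in\mathbb N$. $\lambda$ is the restriction of $d$-dimensional Lebesgue measure to $[0,1]^d$; $G_{\#}\lambda$ is the pushforward of $\lambda$ under $G$. $\mu^*$ is a probability measure on $[0,1]^d$ with Lebesgue density $p^*$ satisfying $p^*(x)>0$ for $x\in[0,1]^d$ and $p^*(x)=0$ for $x\notin[0,1]^d$. On a probability space $(\Omega,\mathcal F,\mathbb P)$, $Y,Y_1,Y_2,\dots$ are i.i.d. $[0,1]^d$-valued random variables with law $\mu^*$ and $Z,Z_1,Z_2,\dots$ are i.i.d. $[0,1]^d$-valued random variables with law $\lambda$. For measurable $G\colon[0,1]^d\to\mathbb R^d$ and $D\colon\mathbb R^d\to[0,1]$, $L(G,D)=\frac12\mathbb E[\log D(Y)+\log(1-D(G(Z)))]$ and $\hat L_n(G,D)=\frac1{2n}\sum_{i=1}^n\log D(Y_i)+\frac1{2n}\sum_{i=1}^n\log(1-D(G(Z_i)))$ (both may take the value $-\infty$). For $G$ with $G_{\#}\lambda$ having Lebesgue density $p$, $D_G\colon\mathbb R^d\to[0,1]$ is defined by $D_G(x)=\frac{p^*(x)}{p^*(x)+p(x)}$ for $x\in[0,1]^d$ and $D_G(x)=0$ for $x\notin[0,1]^d$. The Kullback–Leibler divergence is $d_{KL}(\nu\Vert\mu)=\int\log(\frac{d\nu}{d\mu})d\nu$ and the Jensen–Shannon divergence is $d_{JS}(\nu,\mu)=\frac12\big(d_{KL}(\nu\Vert\frac{\mu+\nu}2)+d_{KL}(\mu\Vert\frac{\mu+\nu}2)\big)$. *)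

(* Defs.v *)
From HB Require Import structures.
From mathcomp Require Import all_boot all_order all_algebra.
From mathcomp Require Import all_classical all_reals all_analysis.
From mathcomp Require Import ereal lebesgue_measure measurable_realfun.

Set Implicit Arguments.
Unset Strict Implicit.
Unset Printing Implicit Defensive.

Import Order.TTheory GRing.Theory Num.Theory.
Import numFieldNormedType.Exports.

Local Open Scope classical_set_scope.
Local Open Scope ring_scope.

(* R^d as a measurable space: row vectors 'rV[R]_d with the product   *)
(* (= Borel) sigma-algebra generated by the coordinate projections.    *)

Definition coord_gen (R : realType) (d : nat) : set (set 'rV[R]_d) :=
  [set A | exists (i : 'I_d) (B : set R),
      measurable B /\ A = (fun x : 'rV[R]_d => x ord0 i) @^-1` B].

Definition Rd (R : realType) (d : nat) := g_sigma_algebraType (@coord_gen R d).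

Definition cube (R : realType) (d : nat) : set (Rd R d) :=
  [set x | forall i : 'I_d, 0 <= x ord0 i <= 1].
Arguments cube R d : clear implicits.

(* [leb] is d-dimensional Lebesgue measure: the measure on the Borel sets of
   R^d giving each half-open box its volume (this characterizes it uniquely). *)
Definition is_lebesgue_measure (R : realType) (d : nat)
  (leb : set (Rd R d) -> \bar R) : Prop :=
  forall a b : 'rV[R]_d, (forall i, a ord0 i <= b ord0 i) ->
    leb [set x : Rd R d | forall i, a ord0 i < x ord0 i <= b ord0 i]
      = (\prod_(i < d) (b ord0 i - a ord0 i))%:E.

Definition restr_cube (R : realType) (d : nat) (leb : set (Rd R d) -> \bar R)
  : set (Rd R d) -> \bar R := fun A => leb (A `&` cube R d).

Local Open Scope ereal_scope.

(* extended logarithm: log 0 = -oo *)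
Definition elog (R : realType) (r : R) : \bar R := lne r%:E.

(* "upper" (dual) extended addition / subtraction: +oo + -oo = +oo *)
Definition uadd (R : realType) (x y : \bar R) : \bar R := dual_adde x y.
Definition usub (R : realType) (x y : \bar R) : \bar R := dual_adde x (- y).

Section divergences.
Context (dT : measure_display) (T : measurableType dT) (R : realType).

Definition is_RN_derivative (nu mu : set T -> \bar R) (f : T -> \bar R) : Prop :=
  [/\ measurable_fun setT f, (forall x, 0 <= f x) &
      forall A, measurable A -> nu A = \int[mu]_(x in A) f x].

Definition dKL (nu mu : set T -> \bar R) : \bar R :=
  match pselect (exists f, is_RN_derivative nu mu f) with
  | left ex => \int[nu]_x lne (proj1_sig (cid ex) x)
  | right _ => +oo
  end.

Definition mixture (mu nu : set T -> \bar R) : set T -> \bar R :=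
  fun A => (2^-1)%:E * (mu A + nu A).

Definition dJS (nu mu : set T -> \bar R) : \bar R :=
  (2^-1)%:E * (dKL nu (mixture mu nu) + dKL mu (mixture mu nu)).

End divergences.

Section gan.
Context (R : realType) (d : nat) (dO : measure_display) (Omega : measurableType dO)
  (P : probability Omega R) (Y Z : nat -> Omega -> Rd R d).

(* Y = Y 0, Y_i = Y i (i >= 1); likewise for Z *)
Definition Lpop (G : Rd R d -> Rd R d) (D : Rd R d -> R) : \bar R :=
  (2^-1)%:E * (\int[P]_w elog (D (Y 0 w)) + \int[P]_w elog (1 - D (G (Z 0 w)))).

Definition Lemp (n : nat) (w : Omega) (G : Rd R d -> Rd R d) (D : Rd R d -> R)
  : \bar R :=
  ((2 * n)%:R^-1)%:E * (\sum_(1 <= i < n.+1) elog (D (Y i w)))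
  + ((2 * n)%:R^-1)%:E * (\sum_(1 <= i < n.+1) elog (1 - D (G (Z i w)))).

End gan.

Definition DG (R : realType) (d : nat) (pstar p : Rd R d -> R) : Rd R d -> R :=
  fun x => if `[< cube R d x >] then (pstar x / (pstar x + p x))%R else 0%R.

Definition mutually_independent (R : realType) (d : nat) (dO : measure_display)
  (Omega : measurableType dO) (P : probability Omega R) (X : nat -> Omega -> Rd R d)
  : Prop :=
  forall (s : seq nat) (B : nat -> set (Rd R d)), uniq s ->
    (forall i, i \in s -> measurable (B i)) ->
    P (\big[setI/setT]_(i <- s) (X i @^-1` B i))
      = \prod_(i <- s) P (X i @^-1` B i).

Definition iid_law (R : realType) (d : nat) (dO : measure_display)
  (Omega : measurableType dO) (P : probability Omega R) (X : nat -> Omega -> Rd R d)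
  (mu : set (Rd R d) -> \bar R) : Prop :=
  [/\ forall i, measurable_fun setT (X i),
      forall i w, cube R d (X i w),
      forall i A, measurable A -> P (X i @^-1` A) = mu A &
      mutually_independent P X].

(* Main.v *)
Require Import Defs.
From HB Require Import structures.
From mathcomp Require Import all_boot all_order all_algebra.
From mathcomp Require Import all_classical all_reals all_analysis.
From mathcomp Require Import ereal lebesgue_measure measurable_realfun.
From mathcomp Require Import ring lra.

Set Implicit Arguments.
Unset Strict Implicit.
Unset Printing Implicit Defensive.

Import Order.TTheory GRing.Theory Num.Theory.
Import numFieldNormedType.Exports.

Local Open Scope classical_set_scope.
Local Open Scope ring_scope.

Local Close Scope ereal_scope.
Local Open Scope ereal_scope.

Lemma uaddyl (R : realType) (x : \bar R) : uadd +oo x = +oo.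
Proof. by case: x. Qed.
Lemma uaddyr (R : realType) (x : \bar R) : uadd x +oo = +oo.
Proof. by case: x. Qed.
Lemma uaddE (R : realType) (x y : R) : uadd x%:E y%:E = (x + y)%:E.
Proof. by []. Qed.
Lemma usubE (R : realType) (x y : R) : usub x%:E y%:E = (x - y)%:E.
Proof. by []. Qed.
Lemma usubNy (R : realType) (x : \bar R) : usub x -oo = +oo.
Proof. by case: x. Qed.
Lemma usubNyNy (R : realType) : usub (-oo : \bar R) -oo = +oo.
Proof. by []. Qed.

Lemma fin_betw (R : realType) (x : \bar R) (a b : R) :
  a%:E <= x -> x <= b%:E -> exists r : R, x = r%:E.
Proof. by case: x => [r||] //; exists r. Qed.

Lemma fin_or_Ny (R : realType) (x : \bar R) (b : R) :
  x <= b%:E -> x = -oo \/ exists r : R, x = r%:E.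
Proof. by case: x => [r||] //; [right; exists r|left]. Qed.
Lemma fin_or_y (R : realType) (x : \bar R) (b : R) :
  b%:E <= x -> x = +oo \/ exists r : R, x = r%:E.
Proof. by case: x => [r||] //; [right; exists r|left]. Qed.

Lemma usub_fin (R : realType) (x y : \bar R) (s : R) :
  `|usub x y| <= s%:E -> exists a b : R, x = a%:E /\ y = b%:E /\ (`|a - b| <= s)%R.
Proof.
case: x => [a||]; case: y => [b||] //=; rewrite /usub /dual_adde /=.
by move=> h; exists a, b; split => //; split => //; rewrite -lee_fin.
Qed.

Lemma combi (R : realType) (GT DT : Type) (Hgen : set GT) (Hdis : set DT)
 (L Lh : GT -> DT -> \bar R) (LG J : GT -> \bar R) (c : GT -> R) (k : R) (Gh : GT) :
 Hgen Gh ->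
 (forall G, Hgen G -> [/\ J G = (c G + k)%:E, LG G = (c G)%:E &
     forall D, Hdis D -> L G D <= (c G)%:E]) ->
 J Gh <= uadd (uadd (uadd
   (usub (ereal_sup [set Lh Gh D | D in Hdis])
         (ereal_inf [set ereal_sup [set Lh G D | D in Hdis] | G in Hgen]))
   (ereal_sup [set usub (LG G) (ereal_sup [set L G D | D in Hdis]) | G in Hgen]))
   (2%:E * ereal_sup [set `|usub (L G D) (Lh G D)| | G in Hgen & D in Hdis]))
   (ereal_inf [set J G | G in Hgen]).
Proof.
move=> HGh Hc.
have [JGh LGh LGhD] := Hc _ HGh.
have [[D0 HD0]|nD] := pselect (exists D, Hdis D); last first.
  have E0 : forall G, [set Lh G D | D in Hdis] = set0.
    by move=> G; apply/seteqP; split => // x [D HD _]; apply: nD; exists D.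
  rewrite E0 ereal_sup0.
  have -> : ereal_inf [set ereal_sup [set Lh G D | D in Hdis] | G in Hgen] = -oo.
    apply/eqP; rewrite -leeNy_eq; apply: ereal_inf_lbound.
    by exists Gh => //; rewrite E0 ereal_sup0.
  by rewrite usubNy uaddyl uaddyl uaddyl leey.
set S := (X in 2%:E * X).
have [Sy|Sy] := eqVneq S +oo.
  by rewrite Sy mulry gtr0_sg ?mul1e // uaddyr uaddyl leey.
have S0 : 0 <= S.
  apply: le_trans (ereal_sup_ubound _); last by exists Gh => //; exists D0.
  exact: abse_ge0.
have [s Ss] : exists s : R, S = s%:E.
  by move: S0 Sy; case: S => [r||] //; exists r.
have HS : forall G D, Hgen G -> Hdis D ->
    exists a b : R, L G D = a%:E /\ Lh G D = b%:E /\ (`|a - b| <= s)%R.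
  move=> G D HG HD; apply: usub_fin; rewrite -Ss.
  by apply: ereal_sup_ubound; exists G => //; exists D.
have [a0 [b0 [La0 [Lb0 ab0]]]] := HS _ _ HGh HD0.
set bb := ereal_sup [set Lh Gh D | D in Hdis].
have bblo : b0%:E <= bb by apply: ereal_sup_ubound; exists D0.
have bbhi : bb <= (c Gh + s)%:E.
  apply: ge_ereal_sup => _ [D HD <-].
  have [a [b [La [Lb ab]]]] := HS _ _ HGh HD.
  have := LGhD _ HD; rewrite La Lb !lee_fin; move: ab; rewrite ler_norml; lra.
have [b' bbE] : exists b' : R, bb = b'%:E.
  exact: fin_betw bblo bbhi.
set aa := ereal_sup [set L Gh D | D in Hdis].
have aalo : a0%:E <= aa by apply: ereal_sup_ubound; exists D0.
have aahi : aa <= (c Gh)%:E by apply: ge_ereal_sup => _ [D HD <-]; exact: LGhD.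
have aahi2 : aa <= (b' + s)%:E.
  apply: ge_ereal_sup => _ [D HD <-].
  have [a [b [La [Lb ab]]]] := HS _ _ HGh HD.
  have : b%:E <= bb by apply: ereal_sup_ubound; exists D.
  rewrite La bbE !lee_fin; move: ab; rewrite ler_norml; lra.
have [a' aaE] : exists a' : R, aa = a'%:E.
  exact: fin_betw aalo aahi.
set qq := ereal_inf _.
have qqhi : qq <= bb by apply: ereal_inf_lbound; exists Gh.
have qqG : forall G, Hgen G -> qq <= (c G + s)%:E.
  move=> G HG; apply: le_trans (ereal_inf_lbound _) _; first by exists G.
  apply: ge_ereal_sup => _ [D HD <-].
  have [a [b [La [Lb ab]]]] := HS _ _ HG HD.
  have [_ _ /(_ _ HD)] := Hc _ HG.
  rewrite La Lb !lee_fin; move: ab; rewrite ler_norml; lra.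
have [qy|[q' qqE]] : qq = -oo \/ exists q' : R, qq = q'%:E.
  by rewrite bbE in qqhi; exact: fin_or_Ny qqhi.
  by rewrite qy usubNy uaddyl uaddyl uaddyl leey.
rewrite bbE qqE usubE.
set dd := ereal_sup _.
have ddlo : (c Gh - a')%:E <= dd.
  by apply: ereal_sup_ubound; exists Gh => //; rewrite LGh -/aa aaE usubE.
have [ddy|[d' ddE]] : dd = +oo \/ exists d' : R, dd = d'%:E.
  exact: fin_or_y ddlo.
  by rewrite ddy uaddyr uaddyl uaddyl leey.
rewrite ddE uaddE Ss -EFinM uaddE.
set gg := ereal_inf _.
have gghi : gg <= J Gh by apply: ereal_inf_lbound; exists Gh.
have gglo : (q' - s + k)%:E <= gg.
  apply: le_ereal_inf_tmp => _ [G HG <-].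
  have [-> _ _] := Hc _ HG.
  have := qqG _ HG; rewrite qqE !lee_fin; lra.
have [g' ggE] : exists g' : R, gg = g'%:E.
  by rewrite JGh in gghi; exact: fin_betw gglo gghi.
rewrite ggE uaddE JGh lee_fin.
move: ddlo aahi2 gglo; rewrite ddE aaE ggE !lee_fin.
have : (0 <= s)%R by rewrite -lee_fin -Ss.
lra.
Qed.

Local Close Scope ereal_scope.
Local Open Scope ereal_scope.

Section eqmi.
Context d (T : measurableType d) (R : realType) (D : set T).
Import HBNNSimple.

Let eqmi0 (m2 m1 : set T -> \bar R) (f : T -> \bar R) :
  (forall A, measurable A -> A `<=` D -> m1 A = m2 A) ->
  [set sintegral m1 h | h in
    [set h : {nnsfun T >-> R} | (forall x, (h x)%:E <= (f \_ D) x)]] `<=`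
  [set sintegral m2 h | h in
    [set h : {nnsfun T >-> R} | (forall x, (h x)%:E <= (f \_ D) x)]].
Proof.
move=> m12 _ [h hfD <-] /=; exists h => //; apply: eq_fsbigr => r _.
have [hrD|hrD] := pselect (h @^-1` [set r] `<=` D); first by rewrite m12.
suff : r = 0%R by move=> ->; rewrite !mul0e.
apply: contra_notP hrD => /eqP r0 t/= htr.
have := hfD t.
rewrite /patch/=; case: ifPn; first by rewrite inE.
move=> tD.
move: r0; rewrite -htr => ht0.
by rewrite le_eqVlt eqe (negbTE ht0)/= lte_fin// ltNge// fun_ge0.
Qed.

Lemma eq_measure_integral' (m2 m1 : set T -> \bar R) (f : T -> \bar R) :
    (forall A, measurable A -> A `<=` D -> m1 A = m2 A) ->
  \int[m1]_(x in D) f x = \int[m2]_(x in D) f x.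
Proof.
move=> m12; rewrite /integral funepos_restrict funeneg_restrict.
by congr (ereal_sup _ - ereal_sup _); rewrite eqEsubset; split;
  apply: eqmi0 => A /m12 // /[apply].
Qed.
End eqmi.

Definition dfun d (T : measurableType d) (R : realType)
  (mu : {measure set T -> \bar R}) (q : T -> R)
  (mq : measurable_fun setT q) (q0 : forall x, (0 <= q x)%R) : set T -> \bar R :=
  fun A => \int[mu]_(x in A) (q x)%:E.

Section dmeas.
Context d (T : measurableType d) (R : realType)
  (mu : {measure set T -> \bar R}) (q : T -> R)
  (mq : measurable_fun setT q) (q0 : forall x, (0 <= q x)%R).

Let m := dfun mu mq q0.

Let m0 : m set0 = 0.
Proof. by rewrite /m /dfun integral_set0. Qed.

Let m_ge0 A : 0 <= m A.
Proof. by apply: integral_ge0 => x _; rewrite lee_fin. Qed.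

Let m_sa : semi_sigma_additive m.
Proof.
move=> /= A mA tA mUA.
rewrite /m /dfun ge0_integral_bigcup//=; last 2 first.
- by apply/measurable_EFinP; exact: measurable_funS mq.
- by move=> x _; rewrite lee_fin.
apply: is_cvg_ereal_nneg_natsum_cond => n _ _.
by apply: integral_ge0 => /= x ?; rewrite lee_fin.
Qed.

HB.instance Definition _ := isMeasure.Build _ _ _ (dfun mu mq q0) m0 m_ge0 m_sa.

End dmeas.

Section density_lemma.
Context d (T : measurableType d) (R : realType)
  (mu : {measure set T -> \bar R}) (q : T -> R)
  (mq : measurable_fun setT q) (q0 : forall x, (0 <= q x)%R).
Local Notation nu := (dfun mu mq q0).
Import HBNNSimple.

Lemma density_integral (f : T -> \bar R) E : (forall x, 0 <= f x) ->
    measurable E -> measurable_fun E f ->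
  \int[mu]_(x in E) (f x * (q x)%:E) = \int[nu]_(x in E) f x.
Proof.
move=> f0 mE mf; set g := fun x => (q x)%:E.
have mg : measurable_fun setT g by exact/measurable_EFinP.
pose h := nnsfun_approx mE mf.
have -> : \int[nu]_(x in E) f x =
    lim (\int[nu]_(x in E) (EFin \o h n) x @[n --> \oo]).
  have fE x : E x -> f x = lim ((EFin \o h n) x @[n --> \oo]).
    by move=> Ex; apply/esym/cvg_lim => //; exact: cvg_nnsfun_approx.
  under eq_integral => x /[!inE] /fE -> //.
  apply: monotone_convergence => //.
  - move=> n; apply/measurable_EFinP.
    by apply: (measurable_funS measurableT) => //; exact/measurable_funP.
  - by move=> n x Ex //=; rewrite lee_fin.
  - by move=> x Ex a b ab; rewrite lee_fin; exact/lefP/nd_nnsfun_approx.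
have -> : \int[mu]_(x in E) (f \* g) x =
    lim (\int[mu]_(x in E) ((EFin \o h n) \* g) x @[n --> \oo]).
  have fg x : E x -> f x * g x = lim (((EFin \o h n) \* g) x @[n --> \oo]).
    by move=> Ex; apply/esym/cvg_lim => //; apply: cvgeZr;
      [by []|exact: cvg_nnsfun_approx].
  under eq_integral => x /[!inE] /fg -> //.
  apply: monotone_convergence => [//| | |].
  - move=> n; apply/emeasurable_funM; apply/measurable_funTS.
      exact/measurable_EFinP.
    exact: mg.
  - by move=> n x Ex /=; rewrite mule_ge0 ?lee_fin.
  - by move=> x Ex a b ab/=; rewrite lee_wpmul2r ?lee_fin//; exact/lefP/nd_nnsfun_approx.
suff suf n : \int[mu]_(x in E) ((EFin \o h n) x * g x) =
    \int[nu]_(x in E) (EFin \o h n) x.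
  by under eq_fun do rewrite suf.
transitivity (\int[nu]_(x in E)
   (\sum_(y \in range (h n)) (y * \1_(h n @^-1` [set y]) x)%:E)); last first.
  by apply: eq_integral => t tE; rewrite /= fimfunE -fsumEFin.
have indich m r : measurable_fun E (fun x => (r * \1_(h m @^-1` [set r]) x)%:E).
  by apply: (measurable_comp measurableT) => //; exact: measurable_funM.
rewrite ge0_integral_fsum//; last by move=> m y Ey; exact: nnfun_muleindic_ge0.
transitivity (\int[mu]_(x in E) (\sum_(y \in range (h n))
    (y * \1_(h n @^-1` [set y]) x)%:E * g x)).
  under [RHS]eq_integral => x xE.
    rewrite -ge0_mule_fsuml => [|y]; last exact: nnfun_muleindic_ge0.
    rewrite fsumEFin // -(fimfunE _ x); over.
  by [].
rewrite ge0_integral_fsum//; last 2 first.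
  - move=> y; apply: emeasurable_funM => //; apply: measurable_funTS.
    exact: mg.
  - by move=> m y Ey; rewrite mule_ge0 ?nnfun_muleindic_ge0// /g lee_fin.
apply: eq_fsbigr => r rhn.
under [RHS]eq_integral do rewrite EFinM.
rewrite integralZl_indic_nnsfun => //.
under eq_integral do rewrite EFinM -muleA.
rewrite ge0_integralZl//.
- under eq_integral do rewrite muleC.
  rewrite (eq_integral (g \_ (h n @^-1` [set r]))); last first.
    by move=> x xE; rewrite epatch_indic.
  by rewrite -integral_mkcondr integral_indic// /dfun setIC.
- apply: emeasurable_funM; first exact/measurable_EFinP.
  exact/measurable_funTS/mg.
- by move=> t Et; rewrite mule_ge0 ?lee_fin.
- by move: rhn; rewrite inE => -[t _ <-]; rewrite lee_fin.
Qed.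

End density_lemma.

Local Close Scope ereal_scope.

Lemma meas_inv (R : realType) : measurable_fun [set: R] (fun t => t^-1).
Proof.
have -> : (fun t : R => t^-1) = (fun t => if 0 < t then expR (- ln t)
   else if t < 0 then - expR (- ln (- t)) else 0).
  apply/funext => t; have [t0|t0|t0] := ltgtP t 0.
  - by rewrite expRN lnK ?invrN ?opprK // posrE oppr_gt0.
  - by rewrite expRN lnK.
  - by rewrite t0 invr0.
apply: measurable_fun_ifT.
- exact: measurable_fun_ltr.
- by apply: measurableT_comp => //; apply: measurableT_comp.
apply: measurable_fun_ifT.
- exact: measurable_fun_ltr.
- apply: measurableT_comp => //; apply: measurableT_comp => //.
  by apply: measurableT_comp => //; apply: measurableT_comp.
- exact: measurable_cst.
Qed.

Lemma meas_elog (R : realType) : measurable_fun [set: R] (fun r => elog r).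
Proof.
have -> : (fun r : R => elog r) = (fun r => if (r <= 0)%R then -oo else (ln r)%:E)%E.
  by apply/funext => r; rewrite /elog /lne.
apply: measurable_fun_ifT.
- exact: measurable_fun_ler.
- exact: measurable_cst.
- exact: measurableT_comp.
Qed.

Lemma measurable_cube (R : realType) (d : nat) : measurable (cube R d).
Proof.
have -> : cube R d = \bigcap_(i in [set: 'I_d])
    ((fun x : Rd R d => x ord0 i) @^-1` `[0%R, 1%R]%classic).
  apply/seteqP; split => x /=.
    by move=> h i _ /=; rewrite in_itv /= h.
  by move=> h i; have := h i I; rewrite /= in_itv.
apply: fin_bigcap_measurable; first exact: finite_finset.
move=> i _; apply: sub_sigma_algebra; exists i, `[0%R, 1%R]%classic; split => //.
Qed.

Section pointwise.
Context (R : realType).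
Local Open Scope ereal_scope.

Lemma elogE (t : R) : (0 < t)%R -> elog t = (ln t)%:E.
Proof. by move=> t0; rewrite /elog lne_EFin. Qed.

Lemma elog0 : elog (0 : R) = -oo.
Proof. by rewrite /elog /lne lexx. Qed.

Lemma elog1 : elog (1 : R) = 0.
Proof. by rewrite elogE // ln1. Qed.

Lemma elog_ge0N (t : R) : (t <= 1)%R -> 0 <= - elog t.
Proof. by move=> t1; rewrite oppe_ge0 /elog lne_le0 lee_fin. Qed.

Lemma ln_le_sub1 (x : R) : (0 < x)%R -> (ln x <= x - 1)%R.
Proof.
move=> x0; have h : (-1 < x - 1)%R by lra.
by have := le_ln1Dx h; rewrite (addrC 1%R) subrK.
Qed.

Lemma bnd1 (u v : R) : (0 < u)%R -> (0 <= v)%R ->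
  (- elog (u / (u + v))) * u%:E <= v%:E.
Proof.
move=> u0 v0; have uv0 : (0 < u + v)%R by lra.
have s0 : (0 < u / (u + v))%R by rewrite divr_gt0.
rewrite elogE // -EFinN -EFinM lee_fin.
have := ln_le_sub1 (x := ((u + v) / u)%R) ltac:(by rewrite divr_gt0).
rewrite -[((u + v) / u)%R]invf_div lnV ?posrE // => h.
have e : (((u / (u + v))^-1 - 1) * u = v)%R by field; lra.
by rewrite -[X in (_ <= X)%R]e ler_wpM2r // ltW.
Qed.

Lemma bnd2 (u v : R) : (0 < u)%R -> (0 <= v)%R ->
  (- elog (1 - u / (u + v))) * v%:E <= u%:E.
Proof.
move=> u0 v0; have uv0 : (0 < u + v)%R by lra.
have -> : (1 - u / (u + v) = v / (u + v))%R by field; lra.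
have [->|vp] := eqVneq v 0%R.
  by rewrite mul0r elog0 mule0 lee_fin ltW.
have vp' : (0 < v)%R by rewrite lt_neqAle eq_sym vp.
rewrite addrC; rewrite addrC in uv0.
have := bnd1 vp' (ltW u0); rewrite addrC.
by [].
Qed.

Lemma key_ineq (u v t : R) : (0 < u)%R -> (0 <= v)%R -> (0 <= t <= 1)%R ->
  (- elog (u / (u + v))) * u%:E + (- elog (1 - u / (u + v))) * v%:E
  <= (- elog t) * u%:E + (- elog (1 - t)) * v%:E.
Proof.
move=> u0 v0 /andP[t0 t1]; have uv0 : (0 < u + v)%R by lra.
have rhs0 : 0 <= (- elog t) * u%:E + (- elog (1 - t)) * v%:E.
  by rewrite adde_ge0 // mule_ge0 ?lee_fin ?elog_ge0N //; lra.
have [v00|vp] := eqVneq v 0%R.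
  rewrite v00 in rhs0 *.
  by rewrite addr0 divff ?gt_eqF // subrr elog0 elog1 mule0 oppe0 mul0e add0e.
have vp' : (0 < v)%R by rewrite lt_neqAle eq_sym vp.
set s := (u / (u + v))%R.
have s0 : (0 < s)%R by rewrite divr_gt0.
have s1 : (0 < 1 - s)%R.
  have -> : (1 - s = v / (u + v))%R by rewrite /s; field; lra.
  by rewrite divr_gt0.
rewrite (elogE s0) (elogE s1) -!EFinN -!EFinM -EFinD.
have [->|t0'] := eqVneq t 0%R.
  by rewrite elog0 /= mulyr gtr0_sg // mul1e addye ?leey //; rewrite subr0 elog1.
have tp : (0 < t)%R by rewrite lt_neqAle eq_sym t0' t0.
have [->|t1'] := eqVneq t 1%R.
  by rewrite subrr elog0 /= mulyr gtr0_sg // mul1e addey ?leey // elog1.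
have tq : (0 < 1 - t)%R by rewrite subr_gt0 lt_neqAle t1' t1.
rewrite (elogE tp) (elogE tq) -!EFinN -!EFinM -EFinD lee_fin.
have h1 := ln_le_sub1 (x := (t / s)%R) ltac:(by rewrite divr_gt0).
have h2 := ln_le_sub1 (x := ((1 - t) / (1 - s))%R) ltac:(by rewrite divr_gt0).
rewrite ln_div ?posrE // in h1; rewrite ln_div ?posrE // in h2.
have e1 : (u * (t / s) = t * (u + v))%R by rewrite /s; field; lra.
have e2 : (v * ((1 - t) / (1 - s)) = (1 - t) * (u + v))%R.
  by rewrite /s; field; apply/andP; split; apply/negP => /eqP; lra.
have k1 : (u * (ln t - ln s) <= u * (t / s - 1))%R by rewrite ler_wpM2l //; lra.
have k2 : (v * (ln (1 - t) - ln (1 - s)) <= v * ((1 - t) / (1 - s) - 1))%R.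
  by rewrite ler_wpM2l //; lra.
nra.
Qed.

End pointwise.

Local Close Scope ereal_scope.
Local Open Scope ereal_scope.

Lemma meas_lne (R : realType) : measurable_fun [set: \bar R] (@lne R).
Proof.
have -> : @lne R = (fun x => if x == +oo then +oo else if x == -oo then -oo
                               else elog (fine x)).
  by apply/funext => -[r| |].
have mb : forall y : \bar R, measurable_fun [set: \bar R] (fun x => x == y).
  move=> y; apply: (measurable_fun_bool true).
  rewrite setTI (_ : _ @^-1` _ = [set y]); first exact: emeasurable_set1.
  by apply/seteqP; split => x /=; [move/eqP|move=> ->; rewrite eqxx].

apply: measurable_fun_ifT; [exact: mb|exact: measurable_cst|].
apply: measurable_fun_ifT; [exact: mb|exact: measurable_cst|].
apply: measurableT_comp; first exact: meas_elog.
exact: fine_measurable.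
Qed.

Lemma dKL_eval d (T : measurableType d) (R : realType) (leb : {measure set T -> \bar R})
 (r q : T -> R) (mr : measurable_fun setT r) (mq : measurable_fun setT q)
 (r0 : forall x, (0 <= r x)%R) (q0 : forall x, (0 <= q x)%R)
 (nu0 mix0 : set T -> \bar R)
 (Hnu : forall A, measurable A -> nu0 A = \int[leb]_(x in A) (r x)%:E)
 (Hmix : forall A, measurable A -> mix0 A = \int[leb]_(x in A) (q x)%:E)
 (rq : forall x, (r x <= 2 * q x)%R)
 (tot : \int[leb]_x (r x)%:E = 1)
 (a : T -> \bar R) (ma : measurable_fun setT a) (a0 : forall x, 0 <= a x)
 (afin : \int[leb]_x (a x * (r x)%:E) < +oo)
 (Ha : forall x, (0 < r x)%R -> lne (r x / q x)%:E = (ln 2)%:E - a x) :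
 dKL nu0 mix0 = (ln 2)%:E - \int[leb]_x (a x * (r x)%:E).
Proof.
set Nu := dfun leb mr r0.
set Mx := dfun leb mq q0.
set f1 := fun x => (r x / q x)%:E.
have mf1 : measurable_fun setT f1.
  apply/measurable_EFinP; apply: measurable_funM => //.
  exact: (measurableT_comp (@meas_inv R) mq).
have f10 : forall x, 0 <= f1 x by move=> x; rewrite lee_fin divr_ge0.
have f1q : forall x, (r x / q x * q x = r x)%R.
  move=> x; have [qx0|qx0] := eqVneq (q x) 0%R.
    have : (r x <= 0)%R by have := rq x; rewrite qx0 mulr0.
    by move=> h; rewrite qx0 mulr0; apply/esym/le_anti; rewrite h r0.
  by rewrite divfK.
have f1int : forall A, measurable A -> \int[Mx]_(x in A) f1 x = nu0 A.
  move=> A mA; rewrite -density_integral //; last exact: measurable_funS mf1.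
  by rewrite Hnu //; apply: eq_integral => x _; rewrite -EFinM f1q.
have MxE : forall A, measurable A -> mix0 A = Mx A by move=> A mA; rewrite Hmix.
have ex : exists f, is_RN_derivative nu0 mix0 f.
  exists f1; split => // A mA; rewrite -f1int //.
  by apply/esym/eq_measure_integral' => B mB _; rewrite MxE.
rewrite /dKL; case: pselect => [ex'|//]; case: cid => f /= [mf f0 Hf].
have ae1 : ae_eq Mx setT f1 f.
  apply: integral_ae_eq => //.
  - apply/integrableP; split => //.
    under eq_integral do rewrite gee0_abs //.
    by rewrite f1int // Hnu // tot ltry.
  - move=> E _ mE; rewrite f1int // Hf //.
    by apply: eq_measure_integral' => B mB _; rewrite MxE.
have mlf : measurable_fun setT (fun x => lne (f x)).
  exact: measurableT_comp (@meas_lne R) mf.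
have mca : measurable_fun setT (fun x => (ln 2)%:E - a x).
  by apply: emeasurable_funB => //; exact: measurable_cst.
have mrz : measurable (r @^-1` `]-oo, 0%R]%classic).
  by rewrite -[X in measurable X]setTI; apply: (mr measurableT); exact: measurable_itv.
have Nu0 : forall B, measurable B -> Mx B = 0 -> Nu B = 0.
  move=> B mB MB; apply/le_anti; rewrite measure_ge0 andbT -MB.
  rewrite /Nu /Mx /dfun.
  apply: le_trans (_ : \int[leb]_(x in B) (2%:E * (q x)%:E) <= _).
    apply: ge0_le_integral => //.
    - by move=> x _; rewrite lee_fin.
    - by apply: measurable_funTS; exact/measurable_EFinP.
    - apply: emeasurable_funM; first exact: measurable_cst.
      by apply: measurable_funTS; exact/measurable_EFinP.
    - by move=> x _; rewrite -EFinM lee_fin.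
  rewrite ge0_integralZl_EFin //.
  - by rewrite -/(dfun leb mq q0 B) -/Mx MB mule0.
  - by move=> x _; rewrite lee_fin.
  - by apply: measurable_funTS; exact/measurable_EFinP.
have Nurz : Nu (r @^-1` `]-oo, 0%R]%classic) = 0.
  rewrite /Nu /dfun; under eq_integral => x.
    rewrite inE /= in_itv /= => h.
    have -> : r x = 0%R by apply/le_anti; rewrite h r0.
    over.
  by rewrite integral0.
rewrite (eq_measure_integral' (m2 := Nu)); last by move=> A mA _; rewrite Hnu.
rewrite (@ae_eq_integral _ _ _ Nu setT (fun x => (ln 2)%:E - a x) (fun x => lne (f x))) //; last first.
  case: ae1 => N [mN MN sN].
  exists (N `|` r @^-1` `]-oo, 0%R]%classic); split.
  - exact: measurableU.
  - apply/le_anti; rewrite measure_ge0 andbT.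
    have := measureU2 Nu mN mrz.
    by move=> h; apply: le_trans h _; rewrite -[X in X <= _]/(Nu N + Nu (r @^-1` `]-oo, 0%R]%classic)) Nu0 // Nurz adde0.
  - move=> x /= hx; apply: contrapT => hn; apply: hx => _.
    have rx : (0 < r x)%R.
      by rewrite ltNge; apply/negP => h; apply: hn; right; rewrite /= in_itv.
    have fx : f1 x = f x.
      by apply: contrapT => h; apply: hn; left; apply: sN => /(_ I).
    by rewrite -fx Ha.
have ic : Nu.-integrable setT (cst (ln 2)%:E).
  apply/integrableP; split; first exact: measurable_cst.
  rewrite integral_cst // (_ : _ [set: T] = 1) ?mule1 ?ltry //; exact: tot.
have ia : Nu.-integrable setT a.
  apply/integrableP; split => //.
  under eq_integral do rewrite gee0_abs //.
  by rewrite -density_integral.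
rewrite (integralB measurableT ic ia).
by rewrite integral_cst // (_ : _ [set: T] = 1) ?mule1 ?(density_integral) //; exact: tot.
Qed.

Local Close Scope ereal_scope.
Local Open Scope ereal_scope.

Section perG.
Context (R : realType) (d : nat) (leb : {measure set (Rd R d) -> \bar R})
  (mustar : probability (Rd R d) R) (pstar : Rd R d -> R)
  (mps : measurable_fun setT pstar)
  (ps_pos : forall x, cube R d x -> (0 < pstar x)%R)
  (ps_out : forall x, ~ cube R d x -> pstar x = 0%R)
  (Hmu : forall A, measurable A ->
      mustar A = (\int[leb]_(x in A) (pstar x)%:E)%E)
  (dO : measure_display) (Omega : measurableType dO) (P : probability Omega R)
  (Y Z : nat -> Omega -> Rd R d)
  (HY : iid_law P Y mustar)
  (HZ : iid_law P Z (restr_cube leb)).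

Let mcube := @measurable_cube R d.

Lemma ps0 x : (0 <= pstar x)%R.
Proof.
have [/ps_pos/ltW //|/ps_out ->//] := pselect (cube R d x).
Qed.

Lemma leb_cube : leb (cube R d) = 1.
Proof.
case: HZ => mZ cZ lZ _.
have := lZ 0%N _ mcube; rewrite /restr_cube setIid.
rewrite (_ : Z 0%N @^-1` cube R d = setT) ?probability_setT //.
by apply/seteqP; split => // w _; exact: cZ.
Qed.

Lemma transY (h : Rd R d -> \bar R) : measurable_fun setT h ->
  (forall x, 0 <= h x) ->
  \int[P]_w h (Y 0%N w) = \int[leb]_x (h x * (pstar x)%:E).
Proof.
move=> mh h0; case: HY => mY cY lY _.
have := ge0_integral_pushforward (mY 0%N) P measurableT mh (fun y _ => h0 y).
rewrite preimage_setT => <-.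
rewrite (eq_measure_integral' (m2 := mustar) (m1 := pushforward P (Y 0%N))); last first.
  by move=> A mA _; rewrite /pushforward; exact: lY.
rewrite (eq_measure_integral' (m2 := dfun leb mps ps0) (m1 := mustar)); last first.
  by move=> A mA _; exact: Hmu.
by rewrite -density_integral.
Qed.

Section withG.
Context (G : Rd R d -> Rd R d) (mG : measurable_fun (cube R d) G)
  (p : Rd R d -> R) (mp : measurable_fun setT p) (p0 : forall x, (0 <= p x)%R)
  (Hp : forall A, measurable A ->
      pushforward (restr_cube leb) G A = (\int[leb]_(x in A) (p x)%:E)%E).

Lemma mGZ : measurable_fun setT (G \o Z 0%N).
Proof.
case: HZ => mZ cZ lZ _.
move=> _ B mB; rewrite setTI.
have -> : (G \o Z 0%N) @^-1` B = Z 0%N @^-1` (cube R d `&` G @^-1` B).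
  by apply/seteqP; split => w /=; [move=> h; split => //; exact: cZ|case].
rewrite -[X in measurable X]setTI; apply: (mZ 0%N measurableT).
exact: mG mcube B mB.
Qed.

Lemma transZ (h : Rd R d -> \bar R) : measurable_fun setT h ->
  (forall x, 0 <= h x) ->
  \int[P]_w h (G (Z 0%N w)) = \int[leb]_x (h x * (p x)%:E).
Proof.
move=> mh h0; case: HZ => mZ cZ lZ _.
have := ge0_integral_pushforward mGZ P measurableT mh (fun y _ => h0 y).
rewrite preimage_setT => <-.
rewrite (eq_measure_integral' (m2 := dfun leb mp p0) (m1 := pushforward P (G \o Z 0%N))); last first.
  move=> A mA _; rewrite /dfun -Hp // /pushforward.
  have -> : (G \o Z 0%N) @^-1` A = Z 0%N @^-1` (cube R d `&` G @^-1` A).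
    by apply/seteqP; split => w /=; [move=> hh; split => //; exact: cZ|case].
  transitivity (restr_cube leb (cube R d `&` G @^-1` A)).
    exact: (lZ 0%N _ (mG mcube mA)).
  by rewrite /restr_cube; congr (leb _); apply/seteqP; split => x /=; tauto.
by rewrite -density_integral.
Qed.

Definition phiD (D : Rd R d -> R) x :=
  (- elog (D x)) * (pstar x)%:E + (- elog (1 - D x)) * (p x)%:E.

Lemma phiD_ge0 (D : Rd R d -> R) x : (0 <= D x <= 1)%R -> 0 <= phiD D x.
Proof.
case/andP => D0 D1.
by rewrite adde_ge0 // mule_ge0 ?lee_fin ?ps0 ?p0 // elog_ge0N //; lra.
Qed.

Lemma mphiD (D : Rd R d -> R) : measurable_fun setT D -> measurable_fun setT (phiD D).
Proof.
move=> mD; apply: emeasurable_funD; apply: emeasurable_funM.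
- apply: measurableT_comp => //; exact: measurableT_comp (@meas_elog R) mD.
- exact/measurable_EFinP.
- apply: measurableT_comp => //; apply: measurableT_comp (@meas_elog R) _.
  by apply: measurable_funB => //; exact: measurable_cst.
- exact/measurable_EFinP.
Qed.

Lemma LpopE (D : Rd R d -> R) : measurable_fun setT D -> (forall x, 0 <= D x <= 1)%R ->
  Lpop P Y Z G D = - ((2^-1)%:E * \int[leb]_x phiD D x).
Proof.
move=> mD D01.
have m1 : measurable_fun setT (fun x => - elog (D x)).
  apply: measurableT_comp => //; exact: measurableT_comp (@meas_elog R) mD.
have m2 : measurable_fun setT (fun x => - elog (1 - D x)).
  apply: measurableT_comp => //; apply: measurableT_comp (@meas_elog R) _.
  by apply: measurable_funB => //; exact: measurable_cst.
have g1 : forall x, 0 <= - elog (D x).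
  by move=> x; apply: elog_ge0N; case/andP: (D01 x).
have g2 : forall x, 0 <= - elog (1 - D x).
  by move=> x; apply: elog_ge0N; case/andP: (D01 x) => ? ?; lra.
rewrite /Lpop.
under eq_integral do rewrite -[elog _]oppeK.
rewrite integral_ge0N; last by move=> w _; exact: g1.
under [X in _ + X]eq_integral do rewrite -[elog _]oppeK.
rewrite (@integral_ge0N _ _ _ P setT (fun w => - elog (1 - D (G (Z 0%N w))))); last by move=> w _; exact: g2.
rewrite (transY m1 g1) (transZ m2 g2).
rewrite -oppeD; last first.
  by apply: ge0_adde_def; rewrite inE; apply: integral_ge0 => x _;
    rewrite mule_ge0 ?lee_fin ?ps0 ?p0.
rewrite muleN -ge0_integralD //.
- by move=> x _; rewrite mule_ge0 ?lee_fin ?ps0.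
- by apply: emeasurable_funM => //; exact/measurable_EFinP.
- by move=> x _; rewrite mule_ge0 ?lee_fin ?p0.
- by apply: emeasurable_funM => //; exact/measurable_EFinP.
Qed.


Let DGf := DG pstar p.

Lemma DG_in x : cube R d x -> DGf x = (pstar x / (pstar x + p x))%R.
Proof. by move=> cx; rewrite /DGf /DG asboolT. Qed.

Lemma DG_out x : ~ cube R d x -> DGf x = 0%R.
Proof. by move=> cx; rewrite /DGf /DG asboolF. Qed.

Lemma DG01 x : (0 <= DGf x <= 1)%R.
Proof.
have [cx|cx] := pselect (cube R d x); last by rewrite DG_out // lexx ler01.
rewrite DG_in //; have := ps_pos cx; have := p0 x => h1 h2.
rewrite divr_ge0 ?addr_ge0 ?ps0 //= ler_pdivrMr; last lra.
lra.
Qed.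

Lemma mDG : measurable_fun setT DGf.
Proof.
rewrite /DGf /DG; apply: measurable_fun_ifT.
- apply: (measurable_fun_bool true); rewrite setTI.
  rewrite (_ : _ @^-1` _ = cube R d) //.
  by apply/seteqP; split => x /=; [move/asboolP|move=> cx; apply/asboolP].
- apply: measurable_funM => //.
  apply: (measurableT_comp (@meas_inv R)).
  exact: measurable_funD.
- exact: measurable_cst.
Qed.

Lemma phi_le D : (forall x, 0 <= D x <= 1)%R -> forall x, phiD DGf x <= phiD D x.
Proof.
move=> D01 x; have [cx|cx] := pselect (cube R d x); last first.
  rewrite /phiD DG_out // ps_out // mule0 subr0 elog1 oppe0 mul0e add0e.
  case/andP: (D01 x) => Dx0 Dx1.
  by rewrite adde_ge0 // mule_ge0 ?lee_fin ?p0 // elog_ge0N //; lra.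
rewrite /phiD DG_in //; apply: key_ineq => //; first exact: ps_pos.
Qed.

Lemma bndA x : (- elog (DGf x)) * (pstar x)%:E <= (p x)%:E.
Proof.
have [cx|cx] := pselect (cube R d x); last by rewrite ps_out // mule0 lee_fin.
by rewrite DG_in //; apply: bnd1 => //; exact: ps_pos.
Qed.

Lemma bndB x : (- elog (1 - DGf x)) * (p x)%:E <= (pstar x)%:E.
Proof.
have [cx|cx] := pselect (cube R d x); last first.
  by rewrite DG_out // subr0 elog1 oppe0 mul0e lee_fin ps0.
by rewrite DG_in //; apply: bnd2 => //; exact: ps_pos.
Qed.

Lemma perG_main : exists c : R,
  [/\ dJS mustar (pushforward (restr_cube leb) G) = (c + ln 2)%:E,
      Lpop P Y Z G (DG pstar p) = c%:E &
      forall D : Rd R d -> R, measurable_fun setT D -> (forall x, 0 <= D x <= 1)%R ->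
        Lpop P Y Z G D <= c%:E].
Proof.
set a := fun x => - elog (DGf x).
set b := fun x => - elog (1 - DGf x).
have ma : measurable_fun setT a.
  apply: measurableT_comp => //; exact: measurableT_comp (@meas_elog R) mDG.
have mb : measurable_fun setT b.
  apply: measurableT_comp => //; apply: measurableT_comp (@meas_elog R) _.
  by apply: measurable_funB => //; exact: mDG.
have a0 : forall x, 0 <= a x.
  by move=> x; apply: elog_ge0N; case/andP: (DG01 x).
have b0 : forall x, 0 <= b x.
  by move=> x; apply: elog_ge0N; case/andP: (DG01 x) => ? ?; lra.
have nuT : pushforward (restr_cube leb) G setT = 1.
  by rewrite /pushforward /restr_cube preimage_setT setTI leb_cube.
have totp : \int[leb]_x (p x)%:E = 1 by rewrite -Hp // nuT.
have tots : \int[leb]_x (pstar x)%:E = 1 by rewrite -Hmu // probability_setT.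
have mps' : measurable_fun setT (fun x => (pstar x)%:E) by exact/measurable_EFinP.
have mp' : measurable_fun setT (fun x => (p x)%:E) by exact/measurable_EFinP.
have IA0 : 0 <= \int[leb]_x (a x * (pstar x)%:E).
  by apply: integral_ge0 => x _; rewrite mule_ge0 ?lee_fin ?ps0.
have IB0 : 0 <= \int[leb]_x (b x * (p x)%:E).
  by apply: integral_ge0 => x _; rewrite mule_ge0 ?lee_fin ?p0.
have IAle : \int[leb]_x (a x * (pstar x)%:E) <= 1.
  rewrite -totp; apply: ge0_le_integral => //.
  - by move=> x _; rewrite mule_ge0 ?lee_fin ?ps0.
  - exact: emeasurable_funM.
  - by move=> x _; exact: bndA.
have IBle : \int[leb]_x (b x * (p x)%:E) <= 1.
  rewrite -tots; apply: ge0_le_integral => //.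
  - by move=> x _; rewrite mule_ge0 ?lee_fin ?p0.
  - exact: emeasurable_funM.
  - by move=> x _; exact: bndB.
have [ia IAE] := fin_betw IA0 IAle.
have [ib IBE] := fin_betw IB0 IBle.
set q := fun x => (2^-1 * (p x + pstar x))%R.
have mq : measurable_fun setT q.
  by apply: measurable_funM; [exact: measurable_cst|exact: measurable_funD].
have q0 : forall x, (0 <= q x)%R.
  by move=> x; rewrite /q mulr_ge0 ?addr_ge0 ?ps0 ?p0 // invr_ge0.
have Hmix : forall A, measurable A ->
    mixture (pushforward (restr_cube leb) G) mustar A =
    \int[leb]_(x in A) (q x)%:E.
  move=> A mA; rewrite /mixture Hp // Hmu // -ge0_integralD //;
    try by [move=> x _; rewrite lee_fin ?ps0 | exact: measurable_funTS].
  rewrite -ge0_integralZl_EFin //;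
    try by [move=> x _; rewrite -EFinD lee_fin addr_ge0 ?ps0 |
            apply: emeasurable_funD; exact: measurable_funTS | rewrite invr_ge0].
have KL1 := @dKL_eval _ _ _ leb pstar q mps mq ps0 q0 mustar _ Hmu Hmix.
have KL2 := @dKL_eval _ _ _ leb p q mp mq p0 q0 _ _ Hp Hmix.
have K1 : dKL mustar (mixture (pushforward (restr_cube leb) G) mustar)
    = (ln 2)%:E - ia%:E.
  rewrite -IAE; apply: (KL1 _ tots _ ma a0).
  - by move=> x; rewrite /q; have := ps0 x; have := p0 x; lra.
  - by rewrite IAE ltry.
  move=> x psx.
  have cx : cube R d x.
    by apply: contrapT => cx; move: psx; rewrite ps_out // ltxx.
  have sp : (0 < pstar x + p x)%R by have := p0 x; lra.
  rewrite /a DG_in // elogE ?divr_gt0 // lne_EFin ?divr_gt0 //; last first.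
    by rewrite /q mulr_gt0 // addrC.
  have -> : (pstar x / q x = 2 * (pstar x / (pstar x + p x)))%R.
    by rewrite /q; field; apply/negP => /eqP; lra.
  rewrite lnM ?posrE ?divr_gt0 //.
  by rewrite -EFinN -EFinB opprK.
have K2 : dKL (pushforward (restr_cube leb) G)
    (mixture (pushforward (restr_cube leb) G) mustar) = (ln 2)%:E - ib%:E.
  rewrite -IBE; apply: (KL2 _ totp _ mb b0).
  - by move=> x; rewrite /q; have := ps0 x; have := p0 x; lra.
  - by rewrite IBE ltry.
  move=> x px.
  have [cx|cx] := pselect (cube R d x).
    have sp : (0 < pstar x + p x)%R by have := ps0 x; lra.
    have e : (1 - pstar x / (pstar x + p x) = p x / (pstar x + p x))%R.
      by field; apply/negP => /eqP; lra.
    rewrite /b DG_in // e elogE ?divr_gt0 // lne_EFin ?divr_gt0 //; last first.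
      by rewrite /q mulr_gt0 // addrC.
    have -> : (p x / q x = 2 * (p x / (pstar x + p x)))%R.
      by rewrite /q; field; apply/negP => /eqP; lra.
    rewrite lnM ?posrE ?divr_gt0 //.
    by rewrite -EFinN -EFinB opprK.
  rewrite /b DG_out // subr0 elog1 oppe0 sube0.
  have -> : (p x / q x = 2)%R.
    by rewrite /q ps_out // addr0; field; apply/negP => /eqP; lra.
  by rewrite lne_EFin.
have Iphi : \int[leb]_x phiD DGf x = (ia + ib)%:E.
  have h1 : forall x, setT x -> 0 <= a x * (pstar x)%:E.
    by move=> x _; apply: mule_ge0; [exact: a0|rewrite lee_fin ps0].
  have h2 : forall x, setT x -> 0 <= b x * (p x)%:E.
    by move=> x _; apply: mule_ge0; [exact: b0|rewrite lee_fin p0].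
  have := @ge0_integralD _ _ _ leb setT measurableT
    (fun x => a x * (pstar x)%:E) (fun x => b x * (p x)%:E) h1
    (emeasurable_funM ma mps') h2 (emeasurable_funM mb mp').
  by rewrite IAE IBE /phiD EFinD => <-.
exists (- (2^-1 * (ia + ib)))%R; split.
- rewrite /dJS K1 K2 -!EFinB -EFinD -EFinM; congr EFin.
  by field.
- by rewrite (LpopE mDG DG01) Iphi -EFinM -EFinN.
- move=> D mD D01; rewrite (LpopE mD D01) EFinN EFinM -Iphi leeN2.
  apply: lee_wpmul2l; first by rewrite lee_fin invr_ge0.
  apply: ge0_le_integral => //.
  + by move=> x _; apply: phiD_ge0; exact: DG01.
  + exact: mphiD mDG.
  + exact: mphiD mD.
  + by move=> x _; apply: phi_le.
Qed.

End withG.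
End perG.

Local Close Scope ereal_scope.
Local Open Scope ereal_scope.

Lemma combi' (R : realType) (GT DT : Type) (Hgen : set GT) (Hdis : set DT)
 (L Lh : GT -> DT -> \bar R) (LG J : GT -> \bar R) (k : R) (Gh : GT) :
 Hgen Gh ->
 (forall G, Hgen G -> exists c : R, [/\ J G = (c + k)%:E, LG G = c%:E &
     forall D, Hdis D -> L G D <= c%:E]) ->
 J Gh <= uadd (uadd (uadd
   (usub (ereal_sup [set Lh Gh D | D in Hdis])
         (ereal_inf [set ereal_sup [set Lh G D | D in Hdis] | G in Hgen]))
   (ereal_sup [set usub (LG G) (ereal_sup [set L G D | D in Hdis]) | G in Hgen]))
   (2%:E * ereal_sup [set `|usub (L G D) (Lh G D)| | G in Hgen & D in Hdis]))
   (ereal_inf [set J G | G in Hgen]).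
Proof.
move=> HGh Hc.
pose c G := match pselect (Hgen G) with
  | left h => proj1_sig (cid (Hc G h)) | right _ => 0%R end.
apply: (@combi R GT DT Hgen Hdis L Lh LG J c k Gh HGh) => G HG.
rewrite /c; case: pselect => // h; by case: cid.
Qed.

Local Close Scope ereal_scope.
Unset Implicit Arguments.

Theorem proposition1 (R : realType) (d : nat)
  (leb : {measure set (Rd R d) -> \bar R})
  (Hleb : is_lebesgue_measure leb)
  (mustar : probability (Rd R d) R) (pstar : Rd R d -> R)
  (Hpstar_meas : measurable_fun setT pstar)
  (Hpstar_pos : forall x, cube R d x -> 0 < pstar x)
  (Hpstar_out : forall x, ~ cube R d x -> pstar x = 0)
  (Hmustar : forall A, measurable A ->
      mustar A = (\int[leb]_(x in A) (pstar x)%:E)%E)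
  (dO : measure_display) (Omega : measurableType dO) (P : probability Omega R)
  (Y Z : nat -> Omega -> Rd R d)
  (HY : iid_law P Y mustar)
  (HZ : iid_law P Z (restr_cube leb))
  (Hgen : set (Rd R d -> Rd R d)) (Hdis : set (Rd R d -> R))
  (Hgen_meas : forall G, Hgen G -> measurable_fun (cube R d) G)
  (Hgen_ac : forall G, Hgen G -> pushforward (restr_cube leb) G `<< leb)
  (dens : (Rd R d -> Rd R d) -> Rd R d -> R)
  (Hdens : forall G, Hgen G ->
      [/\ measurable_fun setT (dens G), (forall x, 0 <= dens G x) &
          forall A, measurable A ->
            pushforward (restr_cube leb) G A = (\int[leb]_(x in A) (dens G x)%:E)%E])
  (Hdis_meas : forall D, Hdis D -> measurable_fun setT D)
  (Hdis_range : forall D, Hdis D -> forall x, 0 <= D x <= 1)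
  (Ghat : nat -> Omega -> (Rd R d -> Rd R d))
  (HGhat : forall n w, Hgen (Ghat n w)) :
  let DeltaG : \bar R :=
    ereal_inf [set dJS mustar (pushforward (restr_cube leb) G) | G in Hgen] in
  let DeltaD : \bar R :=
    ereal_sup [set usub (Lpop P Y Z G (DG pstar (dens G)))
                        (ereal_sup [set Lpop P Y Z G D | D in Hdis]) | G in Hgen] in
  let DeltaS (n : nat) (w : Omega) : \bar R :=
    ereal_sup [set `| usub (Lpop P Y Z G D) (Lemp Y Z n w G D) |%E
                | G in Hgen & D in Hdis] in
  let DeltaT (n : nat) (w : Omega) : \bar R :=
    usub (ereal_sup [set Lemp Y Z n w (Ghat n w) D | D in Hdis])
         (ereal_inf [set ereal_sup [set Lemp Y Z n w G D | D in Hdis] | G in Hgen]) in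
  forall n : nat, (0 < n)%N ->
    {ae P, forall w,
      (dJS mustar (pushforward (restr_cube leb) (Ghat n w))
        <= uadd (uadd (uadd (DeltaT n w) DeltaD) (2%:E * DeltaS n w)) DeltaG)%E}.
Proof.
move=> DeltaG DeltaD DeltaS DeltaT n n0.
apply: aeW => w.
rewrite /DeltaT /DeltaD /DeltaS /DeltaG.
apply: (@combi' R _ _ Hgen Hdis (Lpop P Y Z) (Lemp Y Z n w)
  (fun G => Lpop P Y Z G (DG pstar (dens G)))
  (fun G => dJS mustar (pushforward (restr_cube leb) G)) (ln 2) (Ghat n w)).
  exact: HGhat.
move=> G HG.
have [mp p0 Hp] := Hdens G HG.
have [c [h1 h2 h3]] := perG_main Hpstar_meas Hpstar_pos Hpstar_out Hmustar
  HY HZ (Hgen_meas G HG) mp p0 Hp.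
exists c; split => // D HD.
exact: h3 (Hdis_meas D HD) (Hdis_range D HD).
Qed.
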